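(* Let $r$ and $d$ be positive integers, let $\operatorname{Tv}(d,r)=(d+1)(r-1)+1$, and let $S\subset\mathbb{R}^d$ be a finite set of at least $3\operatorname{Tv}(d,r)-1$ points. Then the Tverberg $r$-partition graph $G_T[S,r]$ is connected.
   Context: A partition of a finite set $S$ into $r$ parts is a collection of $r$ nonempty pairwise disjoint subsets $P_1,\dots,P_r$ (unordered) whose union is $S$. For a finite $S\subset\mathbb{R}^d$, a Tverberg partition of $S$ into $r$ parts is a partition $P_1,\dots,P_r$ of $S$ into $r$ parts with $\bigcap_{j=1}^r\operatorname{conv}(P_j)\neq\emptyset$. For two partitions $P,P'$ of $S$, the partition distance $D(P,P')$ is the minimum number of elements of $S$ that must be removed so that $P$ and $P'$ restricted to the remaining elements coincide (equivalently, the minimum number of elements that must be moved from one part to another to transform $P$ into $P'$). The Tverberg $r$-partition graph $G_T[S,r]$ has as vertices all Tverberg partitions of $S$ into $r$ parts, with an edge between $P$ and $P'$ if and only if $D(P,P')=1$. *)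

(* Defs.v *)
From HB Require Import structures.
From mathcomp Require Import all_boot all_order all_algebra.
From mathcomp Require Import reals.
Set Implicit Arguments. Unset Strict Implicit. Unset Printing Implicit Defensive.
Import Order.TTheory GRing.Theory Num.Theory.
Local Open Scope ring_scope.

Definition Tv (d r : nat) : nat := ((d.+1) * (r - 1) + 1)%N.

Section Tverberg.
Variables (R : realType) (d : nat) (T : finType) (p : T -> 'rV[R]_d).

Definition in_conv (A : {set T}) (x : 'rV[R]_d) : Prop :=
  exists w : T -> R, (forall i, 0 <= w i) /\ \sum_(i in A) w i = 1 /\
                     x = \sum_(i in A) w i *: p i.

Definition is_r_partition (r : nat) (P : {set {set T}}) : Prop :=
  partition P [set: T] /\ #|P| = r.

Definition is_tverberg (r : nat) (P : {set {set T}}) : Prop :=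
  is_r_partition r P /\ exists x, forall B, B \in P -> in_conv B x.

End Tverberg.

Definition restrict (T : finType) (P : {set {set T}}) (X : {set T}) : {set {set T}} :=
  [set B :&: X | B in P] :\ set0.

(* partition distance: least number of elements to remove so that the
   restrictions coincide (removing everything always works) *)
Definition pdist (T : finType) (P Q : {set {set T}}) : nat :=
  \big[minn/#|T|]_(Y : {set T} | restrict P (~: Y) == restrict Q (~: Y)) #|Y|.

Definition tverberg_graph_connected (R : realType) (d : nat) (T : finType)
    (p : T -> 'rV[R]_d) (r : nat) : Prop :=
  forall P Q, is_tverberg p r P -> is_tverberg p r Q ->
  exists (k : nat) (f : nat -> {set {set T}}),
    f 0%N = P /\ f k = Q /\
    (forall i, (i <= k)%N -> is_tverberg p r (f i)) /\
    (forall i, (i < k)%N -> pdist (f i) (f i.+1) = 1%N).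

(* Main.v *)
Require Import Defs.
From HB Require Import structures.
From mathcomp Require Import all_boot all_order all_algebra.
From mathcomp Require Import reals.
From mathcomp Require Import ring lra zify.
From Stdlib Require Import IndefiniteDescription.
From mathcomp Require boolp classical_sets topology normedtype derive.
Set Implicit Arguments. Unset Strict Implicit. Unset Printing Implicit Defensive.
Import Order.TTheory GRing.Theory Num.Theory.

Module Part2.
Local Open Scope ring_scope.

Section Supp.
Variable R : realType.

Lemma ex_min (I : finType) (P : pred I) (F : I -> R) i0 :
  P i0 -> exists2 i, P i & forall j, P j -> F i <= F j.
Proof. by move=> Pi0; case: (arg_minP F Pi0) => i Pi H; exists i. Qed.

Lemma dep (I : finType) m (a : I -> 'rV[R]_m) (S : {set I}) : (m < #|S|)%N ->
  exists c : I -> R, [/\ exists i, c i != 0, forall i, i \notin S -> c i = 0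
    & \sum_i c i *: a i = 0].
Proof.
move=> hS.
have [i0 i0S] : exists i0, i0 \in S.
  by apply/set0Pn; rewrite -card_gt0 (leq_ltn_trans _ hS).
pose A : 'M[R]_(#|S|, m) := \matrix_(k, j) a (enum_val k) ord0 j.
have : kermx A != 0.
  rewrite kermx_eq0 /row_free neq_ltn; apply/orP; left.
  exact: leq_ltn_trans (rank_leq_col A) hS.
case/matrix0Pn => i [j hij].
pose u := row i (kermx A).
have uA : u *m A = 0 by apply/sub_kermxP; exact: row_sub.
exists (fun x => if x \in S then u ord0 (enum_rank_in i0S x) else 0); split.
- exists (enum_val j); rewrite enum_valP enum_valK_in /u mxE; exact: hij.
- by move=> x /negbTE ->.
rewrite mulmx_sum_row in uA; rewrite -[X in _ = X]uA.
under eq_bigr => x _ do rewrite (fun_if (fun c => c *: a x)) scale0r.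
rewrite -big_mkcond /= (big_enum_val (fun x => u ord0 (enum_rank_in i0S x) *: a x)) /=.
apply: eq_bigr => k _; rewrite enum_valK_in; congr (_ *: _).
by apply/rowP => l; rewrite !mxE.
Qed.


Lemma supp_red (I : finType) m (a : I -> 'rV[R]_m) (lam : I -> R) :
  (forall i, 0 <= lam i) ->
  exists mu : I -> R, [/\ forall i, 0 <= mu i, forall i, lam i = 0 -> mu i = 0,
     (#|[set i | mu i != 0%R]| <= m)%N & \sum_i mu i *: a i = \sum_i lam i *: a i].
Proof.
move=> hl; move: (leqnn #|[set i | lam i != 0%R]|).
move: {2}#|_| => n.
elim: n lam hl => [|n IH] lam hl hn.
  by exists lam; split => //; exact: leq_trans hn _.
case: (leqP #|[set i | lam i != 0%R]| m) => hm; first by exists lam.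
have [c [[i1 ci1] cS c0]] := dep a hm.
have [c' [[i2 ci2] cS' c0']] : exists c' : I -> R, [/\ exists i, 0 < c' i,
    forall i, i \notin [set i | lam i != 0] -> c' i = 0 & \sum_i c' i *: a i = 0].
  case: (boolP (0 < c i1)) => hc; first by exists c; split => //; exists i1.
  exists (fun i => - c i); split.
  - exists i1; rewrite oppr_gt0 lt_neqAle ci1 /=; by rewrite real_leNgt ?num_real.
  - by move=> i /cS ->; rewrite oppr0.
  - by under eq_bigr do rewrite scaleNr; rewrite sumrN c0 oppr0.
have [i0 Pi0 i0min] := @ex_min _ (fun i => 0 < c' i) (fun i => lam i / c' i) _ ci2.
pose t := lam i0 / c' i0.
have t0 : 0 <= t by rewrite /t divr_ge0 // ltW.
pose lam' i := lam i - t * c' i.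
have hl' : forall i, 0 <= lam' i.
  move=> i; rewrite /lam' subr_ge0.
  case: (ltrP 0 (c' i)) => hci.
    by rewrite -ler_pdivlMr // i0min.
  apply: le_trans (hl i); exact: mulr_ge0_le0.
have supp' : forall i, lam i = 0 -> lam' i = 0.
  move=> i hi; rewrite /lam' hi cS' ?inE ?hi ?eqxx // mulr0 subr0 //.
have lam'0 : lam' i0 = 0 by rewrite /lam' /t divfK ?subrr // gt_eqF.
have i0S : i0 \in [set i | lam i != 0].
  apply/negPn/negP => /cS' h; by rewrite h ltxx in Pi0.
have hn' : (#|[set i | lam' i != 0%R]| <= n)%N.
  have sub : [set i | lam' i != 0] \subset [set i | lam i != 0] :\ i0.
    apply/subsetP => i; rewrite !inE => h; apply/andP; split.
      by apply: contraNneq h => ->; rewrite lam'0.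
    by apply: contraNneq h => /supp' ->.
  rewrite -ltnS; apply: leq_trans hn; apply: leq_ltn_trans (subset_leq_card sub) _.
  by rewrite (cardsD1 i0 [set i | lam i != 0]) i0S.
have [mu [mu0 musupp mucard musum]] := IH lam' hl' hn'.
exists mu; split => //.
  by move=> i /supp' /musupp.
rewrite musum /lam'.
under eq_bigr do rewrite scalerBl.
by rewrite sumrB; under [X in _ - X = _]eq_bigr do rewrite -scalerA; rewrite -scaler_sumr c0' scaler0 subr0.
Qed.

End Supp.

End Part2.
Import Part2.

Module Part3.
Local Open Scope ring_scope.

Section Colorful.
Variable R : realType.

Definition dot D (u v : 'rV[R]_D) := \sum_j u ord0 j * v ord0 j.
Definition nsq' D (u : 'rV[R]_D) := dot u u.

Definition MinNormProp := forall (k D : nat) (v : 'I_k.+1 -> 'rV[R]_D),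
  exists lam : 'I_k.+1 -> R, [/\ (forall i, 0 <= lam i), \sum_i lam i = 1 &
    forall mu : 'I_k.+1 -> R, (forall i, 0 <= mu i) -> \sum_i mu i = 1 ->
      nsq' (\sum_i lam i *: v i) <= nsq' (\sum_i mu i *: v i)].

Lemma mul_self_ge0 (x : R) : 0 <= x * x.
Proof. by rewrite -expr2 sqr_ge0. Qed.

Lemma dotDl D (u v w : 'rV[R]_D) : dot (u + v) w = dot u w + dot v w.
Proof. by rewrite /dot -big_split; apply: eq_bigr => j _; rewrite mxE mulrDl. Qed.

Lemma dotZl D a (u w : 'rV[R]_D) : dot (a *: u) w = a * dot u w.
Proof. by rewrite /dot mulr_sumr; apply: eq_bigr => j _; rewrite mxE mulrA. Qed.

Lemma dotNl D (u w : 'rV[R]_D) : dot (- u) w = - dot u w.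
Proof. by rewrite -scaleN1r dotZl mulN1r. Qed.

Lemma dotBl D (u v w : 'rV[R]_D) : dot (u - v) w = dot u w - dot v w.
Proof. by rewrite dotDl dotNl. Qed.

Lemma dotC D (u w : 'rV[R]_D) : dot u w = dot w u.
Proof. by apply: eq_bigr => j _; rewrite mulrC. Qed.

Lemma dot_suml D (I : finType) (l : I -> R) (v : I -> 'rV[R]_D) w :
  dot (\sum_i l i *: v i) w = \sum_i l i * dot (v i) w.
Proof.
rewrite /dot; under eq_bigr => j _ do rewrite summxE mulr_suml.
rewrite exchange_big; apply: eq_bigr => i _; rewrite mulr_sumr.
by apply: eq_bigr => j _; rewrite mxE mulrA.
Qed.

Lemma nsq'_ge0 D (u : 'rV[R]_D) : 0 <= nsq' u.
Proof. by apply: sumr_ge0 => j _; exact: mul_self_ge0. Qed.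

Lemma nsq'_eq0 D (u : 'rV[R]_D) : nsq' u = 0 -> u = 0.
Proof.
move=> h; apply/rowP => j; rewrite mxE.
have := @psumr_eq0P _ _ predT (fun j => u ord0 j * u ord0 j) (fun j _ => mul_self_ge0 (u ord0 j)) h j isT.
rewrite ord1 => /eqP; rewrite mulf_eq0 orbb => /eqP //.
Qed.

Lemma nsq'_addZ D (z w : 'rV[R]_D) t :
  nsq' (z + t *: w) = nsq' z + t * (2 * dot w z + t * nsq' w).
Proof.
rewrite /nsq' !dotDl !dotZl ![dot _ (z + _)]dotC !dotDl !dotZl [dot z w]dotC.
ring.
Qed.

Lemma segment D (z q : 'rV[R]_D) : dot (q - z) z < 0 ->
  exists t, [/\ 0 < t, t <= 1 & nsq' ((1 - t) *: z + t *: q) < nsq' z].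
Proof.
move=> ha.
set a := dot (q - z) z in ha; set b := nsq' (q - z).
have hb : 0 <= b := nsq'_ge0 _.
have e : forall t, nsq' ((1 - t) *: z + t *: q) = nsq' z + t * (2 * a + t * b).
  move=> t; have -> : (1 - t) *: z + t *: q = z + t *: (q - z).
    by rewrite scalerBl scale1r scalerBr addrA addrAC.
  by rewrite nsq'_addZ.
pose t := if b <= - a then 1 else - a / b.
have a0 : 0 < - a by rewrite oppr_gt0.
have [t0 t1 tb] : [/\ 0 < t, t <= 1 & t * b <= - a].
  rewrite /t; case: ifP => h; first by rewrite mul1r ltr01 lexx.
  have b0 : 0 < b by move/negbT: h; rewrite -ltNge; apply: lt_trans.
  split; first by rewrite divr_gt0.
    by rewrite ler_pdivrMr // mul1r ltW // ltNge h.
  by rewrite divfK ?gt_eqF.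
exists t; split => //; rewrite e gtrDl pmulr_rlt0 //.
apply: le_lt_trans (_ : 2 * a + - a < 0); first by rewrite lerD2l.
by rewrite mulr2n mulrDl mul1r -addrA subrr addr0.
Qed.


Lemma dot0l D (z : 'rV[R]_D) : dot 0 z = 0.
Proof. by rewrite /dot big1 // => j _; rewrite mxE mul0r. Qed.

Lemma fin_best (A : finType) (X : Type) (ok : A -> X -> Prop) (val : A -> X -> R)
  (a0 : A) :
  (forall a, exists x, ok a x /\ forall y, ok a y -> val a x <= val a y) ->
  exists a x, ok a x /\ forall a' y, ok a' y -> val a x <= val a' y.
Proof.
move=> h.
suff : forall s : seq A, s != [::] -> exists a x, ok a x /\
   forall a', a' \in s -> forall y, ok a' y -> val a x <= val a' y.
  move=> /(_ (enum A)) [|a [x [ox H]]].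
    by apply/eqP => e; have := mem_enum A a0; rewrite e.
  by exists a, x; split => // a' y; apply: H; rewrite mem_enum.
elim => [//|b s IH] _.
have [xb [ob Hb]] := h b.
case: (eqVneq s [::]) => [->|sn].
  by exists b, xb; split => // a'; rewrite inE => /eqP ->; exact: Hb.
have [a [x [ox H]]] := IH sn.
case: (lerP (val b xb) (val a x)) => cmp.
  exists b, xb; split => // a'; rewrite inE => /orP [/eqP -> | ha] y oy.
    exact: Hb.
  exact: le_trans cmp (H _ ha _ oy).
exists a, x; split => // a'; rewrite inE => /orP [/eqP -> | ha] y oy.
  exact: le_trans (ltW cmp) (Hb _ oy).
exact: H.
Qed.

Lemma comb_sum (I : finType) (l : I -> R) i t :
  \sum_k ((1 - t) * l k + t * (k == i)%:R) = (1 - t) * \sum_k l k + t.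
Proof.
rewrite big_split /= -mulr_sumr; congr (_ + _).
rewrite (bigD1 i) //= eqxx big1 ?addr0 ?mulr1 // => k /negbTE ->.
by rewrite mulr0.
Qed.

Lemma comb_vec D (I : finType) (l : I -> R) (w : I -> 'rV[R]_D) i t :
  \sum_k ((1 - t) * l k + t * (k == i)%:R) *: w k
  = (1 - t) *: \sum_k l k *: w k + t *: w i.
Proof.
under eq_bigr do rewrite scalerDl -!scalerA.
rewrite big_split /= -!scaler_sumr; congr (_ + _); congr (t *: _).
rewrite (bigD1 i) //= eqxx scale1r big1 ?addr0 // => k /negbTE ->.
by rewrite scale0r.
Qed.

Lemma comb_ok (I : finType) (l : I -> R) i t :
  (forall k, 0 <= l k) -> \sum_k l k = 1 -> 0 < t -> t <= 1 ->
  (forall k, 0 <= (1 - t) * l k + t * (k == i)%:R) /\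
  \sum_k ((1 - t) * l k + t * (k == i)%:R) = 1.
Proof.
move=> l0 l1 t0 t1; split; last by rewrite comb_sum l1 mulr1 subrK.
move=> k; apply: addr_ge0; apply: mulr_ge0 => //; rewrite ?subr_ge0 ?ler0n //.
exact: ltW.
Qed.

Lemma colorful (mn : MinNormProp) D r (v : 'I_D.+1 -> 'I_r -> 'rV[R]_D) :
  (forall i, exists b : 'I_r -> R,
     [/\ forall j, 0 <= b j, \sum_j b j = 1 & \sum_j b j *: v i j = 0]) ->
  exists (c : 'I_D.+1 -> 'I_r) (al : 'I_D.+1 -> R),
    [/\ forall i, 0 <= al i, \sum_i al i = 1 & \sum_i al i *: v i (c i) = 0].
Proof.
move=> hcl.
have [j0 _] : exists j0 : 'I_r, True.
  case: r v hcl => [|r] v hcl; last by exists ord0.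
  have [b [_ b1 _]] := hcl ord0; rewrite big_ord0 in b1.
  by have := oner_neq0 R; rewrite -b1 eqxx.
pose ok (c : {ffun 'I_D.+1 -> 'I_r}) (l : 'I_D.+1 -> R) :=
  (forall i, 0 <= l i) /\ \sum_i l i = 1.
pose val (c : {ffun 'I_D.+1 -> 'I_r}) (l : 'I_D.+1 -> R) :=
  nsq' (\sum_i l i *: v i (c i)).
have [c [l [[l0 l1] lmin]]] : exists c l, ok c l /\
    forall c' y, ok c' y -> val c l <= val c' y.
  apply: (@fin_best _ _ ok val [ffun=> j0]) => c.
  have [lam [lam0 lam1 H]] := mn D D (fun i => v i (c i)).
  by exists lam; split => // y [y0 y1]; exact: H.
set z := \sum_i l i *: v i (c i).
have zdef : val c l = nsq' z by [].
case: (eqVneq z 0) => [z0|zn0]; first by exists c, l.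
have nz : 0 < nsq' z.
  rewrite lt_neqAle nsq'_ge0 andbT eq_sym; apply/eqP => /nsq'_eq0 h.
  by rewrite h eqxx in zn0.
have hi : forall i, 0 <= dot (v i (c i) - z) z.
  move=> i; rewrite leNgt; apply/negP => /segment [t [t0 t1 tlt]].
  have [ok1 ok2] := comb_ok i l0 l1 t0 t1.
  have := lmin c _ (conj ok1 ok2); rewrite /val comb_vec -/z.
  by rewrite leNgt tlt.
have hii : forall i, l i != 0 -> dot (v i (c i)) z = nsq' z.
  have S0 : \sum_i l i * dot (v i (c i) - z) z = 0.
    under eq_bigr do rewrite dotBl mulrBr.
    by rewrite sumrB -dot_suml -/z -mulr_suml l1 mul1r subrr.
  move=> i li.
  have := @psumr_eq0P _ _ predT (fun i => l i * dot (v i (c i) - z) z)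
     (fun i _ => mulr_ge0 (l0 i) (hi i)) S0 i isT.
  by move/eqP; rewrite mulf_eq0 (negbTE li) /= dotBl subr_eq0 => /eqP.
have [mu [mu0 musupp mucard musum]] := supp_red (fun i => v i (c i)) l0.
rewrite -/z in musum.
have mu1 : \sum_i mu i = 1.
  have e : nsq' z = (\sum_i mu i) * nsq' z.
    rewrite {1}/nsq' -{1}musum dot_suml mulr_suml; apply: eq_bigr => i _.
    case: (eqVneq (mu i) 0) => [->|mi]; first by rewrite !mul0r.
    by rewrite hii //; apply: contraNneq mi => /musupp ->.
  have : ((\sum_i mu i) - 1) * nsq' z = 0 by rewrite mulrBl -e mul1r subrr.
  by move/eqP; rewrite mulf_eq0 (gt_eqF nz) orbF subr_eq0 => /eqP.
have [i0 mi0] : exists i0, mu i0 = 0.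
  case: (pickP (fun i => mu i == 0)) => [i0 /eqP h | h]; first by exists i0.
  have e : [set i | mu i != 0] = setT by apply/setP => i; rewrite !inE h.
  by move: mucard; rewrite e cardsT card_ord ltnn.
have [b [b0 b1 bsum]] := hcl i0.
pose x j := dot (v i0 j) z.
have [j1 _ j1min] := @ex_min _ _ predT x j0 isT.
have xj1 : x j1 <= 0.
  have : \sum_j b j * x j = 0 by rewrite /x -dot_suml bsum dot0l.
  move=> <-; rewrite -[x j1]mul1r -b1 mulr_suml; apply: ler_sum => j _.
  by apply: ler_wpM2l => //; exact: j1min.
pose c' := [ffun i => if i == i0 then j1 else c i].
have musum' : \sum_i mu i *: v i (c' i) = z.
  rewrite -musum; apply: eq_bigr => i _; rewrite ffunE.
  by case: (eqVneq i i0) => [->|//]; rewrite mi0 !scale0r.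
have qneg : dot (v i0 (c' i0) - z) z < 0.
  rewrite ffunE eqxx dotBl -/(x j1) subr_lt0; apply: le_lt_trans xj1 nz.
have [t [t0 t1 tlt]] := segment qneg.
have [ok1 ok2] := comb_ok i0 mu0 mu1 t0 t1.
have := lmin c' _ (conj ok1 ok2); rewrite /val comb_vec musum' -/z.
by rewrite leNgt tlt.
Qed.

End Colorful.

End Part3.
Import Part3.

Module Part4.
Local Open Scope ring_scope.

Lemma sum_row_mx (R : ringType) (I : finType) (P : pred I) m n1 n2
  (A : I -> 'M[R]_(m,n1)) (B : I -> 'M[R]_(m,n2)) :
  \sum_(i | P i) row_mx (A i) (B i) = row_mx (\sum_(i | P i) A i) (\sum_(i | P i) B i).
Proof. by elim/big_rec3: _ => [|i x y z _ ->]; rewrite ?row_mx0 ?add_row_mx. Qed.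

Lemma sum_mxvec (R : ringType) (I : finType) m n (A : I -> 'M[R]_(m,n)) (l : I -> R) :
  \sum_i l i *: mxvec (A i) = mxvec (\sum_i l i *: A i).
Proof. by rewrite linear_sum; apply: eq_bigr => i _; rewrite linearZ. Qed.

Lemma sum_natmul (R : ringType) (I : finType) (P : pred I) (F : I -> R) :
  \sum_i (P i)%:R * F i = \sum_(i | P i) F i.
Proof. by rewrite [RHS]big_mkcond; apply: eq_bigr => i _; case: (P i); rewrite ?mul1r ?mul0r. Qed.

Lemma sum_delta (R : ringType) n m : (m < n)%N -> \sum_(j < n) (j == m :> nat)%:R = 1 :> R.
Proof.
move=> h; rewrite (bigD1 (Ordinal h)) //= eqxx big1 ?addr0 // => j hj.
by rewrite (_ : (j == m :> nat) = false) //; apply/negbTE; apply: contra hj => /eqP e;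
  apply/eqP; apply: val_inj.
Qed.

Section Sark.
Variables (R : realType) (d k : nat) (T : finType) (p : T -> 'rV[R]_d).

Definition q (t : T) : 'rV[R]_(d + 1) := row_mx (p t) 1.
Definition E (t : T) (j : 'I_k.+1) : 'M[R]_(k, d + 1) :=
  \matrix_(a, b) (q t ord0 b * ((j == a :> nat)%:R - (j == k :> nat)%:R)).

Definition tv_lab (L : T -> 'I_k.+1) :=
  (forall j, exists t, L t = j) /\ exists x, forall j, in_conv p [set t | L t == j] x.

Definition Y (L : T -> 'I_k.+1) (mu : T -> R) (j : 'I_k.+1) :=
  \sum_(t | L t == j) mu t *: q t.

Lemma blocksum (L : T -> 'I_k.+1) (mu : T -> R) j :
  Y L mu j = row_mx (\sum_(t | L t == j) mu t *: p t) ((\sum_(t | L t == j) mu t) *: 1).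
Proof.
rewrite /Y /q; under eq_bigr do rewrite scale_row_mx.
by rewrite sum_row_mx scaler_suml.
Qed.

Lemma E_entry (L : T -> 'I_k.+1) (mu : T -> R) a b :
  (\sum_t mu t *: E t (L t)) a b =
  Y L mu (widen_ord (leqnSn k) a) ord0 b - Y L mu ord_max ord0 b.
Proof.
rewrite summxE /Y !summxE.
under eq_bigr do rewrite !mxE mulrBr mulrBr.
rewrite sumrB; congr (_ - _).
  rewrite -[RHS]sum_natmul; apply: eq_bigr => t _; rewrite !mxE.
  rewrite (_ : (L t == widen_ord _ a) = (L t == a :> nat)); last by rewrite -val_eqE.
  ring.
rewrite -[RHS]sum_natmul; apply: eq_bigr => t _; rewrite !mxE.
rewrite (_ : (L t == ord_max) = (L t == k :> nat)); last by rewrite -val_eqE.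
ring.
Qed.

Lemma decode (L : T -> 'I_k.+1) (mu : T -> R) :
  \sum_t mu t *: E t (L t) = 0 -> forall j, Y L mu j = Y L mu ord_max.
Proof.
move=> h j.
case: (ltnP j k) => hj.
  have -> : j = widen_ord (leqnSn k) (Ordinal hj) by apply: val_inj.
  apply/rowP => b; apply/eqP; rewrite -subr_eq0.
  by rewrite -E_entry h mxE.
have -> : j = ord_max by apply: val_inj; apply/eqP; rewrite eqn_leq hj -ltnS ltn_ord.
by [].
Qed.


Lemma core_lemma (L : T -> 'I_k.+1) (mu : T -> R) :
  (forall t, 0 <= mu t) -> \sum_t mu t *: E t (L t) = 0 -> 0 < \sum_t mu t ->
  forall L' : T -> 'I_k.+1, (forall t, mu t != 0 -> L' t = L t) -> tv_lab L'.
Proof.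
move=> mu0 hE hpos L' hL'.
have YL : forall j, Y L' mu j = Y L mu j.
  move=> j; rewrite /Y big_mkcond [RHS]big_mkcond; apply: eq_bigr => t _.
  case: (eqVneq (mu t) 0) => [->|/hL' -> //].
  by rewrite scale0r; case: ifP; case: ifP.
have dec := decode hE.
pose s := \sum_(t | L t == ord_max) mu t.
pose X := \sum_(t | L t == ord_max) mu t *: p t.
have hj : forall j, \sum_(t | L' t == j) mu t = s /\ \sum_(t | L' t == j) mu t *: p t = X.
  move=> j; have := dec j; rewrite -YL !blocksum => /eq_row_mx [h1 h2].
  split => //; have := congr1 (fun M : 'rV[R]_1 => M ord0 ord0) h2.
  by rewrite !mxE eqxx !mulr1.
have spos : 0 < s.
  have e : \sum_t mu t = s *+ k.+1.
    rewrite (partition_big L' predT) //=.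
    under eq_bigr do rewrite (proj1 (hj _)).
    by rewrite sumr_const card_ord.
  by rewrite e pmulrn_lgt0 in hpos.
split.
  move=> j; case: (pickP (fun t => L' t == j)) => [t /eqP ht|none]; first by exists t.
  exfalso; have := proj1 (hj j); rewrite big_pred0 // => s0.
  by rewrite -s0 ltxx in spos.
exists (s^-1 *: X) => j.
exists (fun t => mu t / s); split; [|split].
- by move=> t; rewrite divr_ge0 // ltW.
- rewrite (eq_bigl (fun t => L' t == j)); last by move=> t; rewrite inE.
  by rewrite -mulr_suml (proj1 (hj j)) divff // gt_eqF.
- rewrite (eq_bigl (fun t => L' t == j)); last by move=> t; rewrite inE.
  rewrite -(proj2 (hj j)) scaler_sumr; apply: eq_bigr => t _.
  by rewrite scalerA mulrC.
Qed.


Lemma sumE t : \sum_j E t j = 0.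
Proof.
apply/matrixP => a b; rewrite summxE mxE.
under eq_bigr do rewrite mxE.
rewrite -mulr_sumr sumrB sum_delta ?sum_delta ?subrr ?mulr0 //.
exact: ltn_trans (ltn_ord a) _.
Qed.

Lemma tverberg_exists (mn : MinNormProp R) (X : {set T}) :
  ((k * (d + 1)).+1 <= #|X|)%N ->
  exists (L : T -> 'I_k.+1) (C : {set T}), C \subset X /\
    forall L', (forall t, t \in C -> L' t = L t) -> tv_lab L'.
Proof.
move=> hX.
pose e (i : 'I_(k * (d + 1)).+1) : T := @enum_val _ (mem X) (widen_ord hX i).
have einj : injective e.
  by move=> i j /enum_val_inj /(congr1 val) /= /val_inj.
have eX : forall i, e i \in X by move=> i; exact: enum_valP.
have hcl : forall i, exists b : 'I_k.+1 -> R,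
     [/\ forall j, 0 <= b j, \sum_j b j = 1 & \sum_j b j *: mxvec (E (e i) j) = 0].
  move=> i; exists (fun=> (k.+1)%:R^-1); split.
  - by move=> j; rewrite invr_ge0 ler0n.
  - by rewrite sumr_const card_ord -[LHS]mulr_natr mulVf // pnatr_eq0.
  - by rewrite sum_mxvec -scaler_sumr sumE scaler0 linear0.
have [c [al [al0 al1 alsum]]] := colorful mn hcl.
rewrite sum_mxvec in alsum; move/eqP: alsum; rewrite mxvec_eq0 => /eqP alsum.
pose L t := if [pick i | e i == t] is Some i then c i else ord0.
have Le : forall i, L (e i) = c i.
  move=> i; rewrite /L; case: pickP => [j /eqP /einj -> // | /(_ i)].
  by rewrite eqxx.
pose mu t := \sum_i (e i == t)%:R * al i.
have transfer : forall (V : lmodType R) (F : T -> V),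
    \sum_t mu t *: F t = \sum_i al i *: F (e i).
  move=> V F; rewrite /mu; under eq_bigr do rewrite scaler_suml.
  rewrite exchange_big /=; apply: eq_bigr => i _.
  rewrite (bigD1 (e i)) //= eqxx mul1r big1 ?addr0 // => t.
  by rewrite eq_sym => /negbTE ->; rewrite mul0r scale0r.
have mu0 : forall t, 0 <= mu t.
  by move=> t; apply: sumr_ge0 => i _; apply: mulr_ge0; rewrite ?ler0n.
have musum : \sum_t mu t = 1.
  rewrite /mu exchange_big /= -[RHS]al1; apply: eq_bigr => i _.
  rewrite (bigD1 (e i)) //= eqxx mul1r big1 ?addr0 // => t.
  by rewrite eq_sym => /negbTE ->; rewrite mul0r.
have hE : \sum_t mu t *: E t (L t) = 0.
  by rewrite (transfer _ (fun t => E t (L t))); under eq_bigr do rewrite Le; exact: alsum.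
exists L, [set t | mu t != 0]; split.
  apply/subsetP => t; rewrite inE => h.
  case: (pickP (fun i => e i == t)) => [i /eqP <- | none]; first exact: eX.
  by move: h; rewrite /mu big1 ?eqxx // => i _; rewrite none mul0r.
move=> L' hL'; apply: (core_lemma mu0 hE); first by rewrite musum ltr01.
by move=> t ht; apply: hL'; rewrite inE.
Qed.

Lemma core_red (L : T -> 'I_k.+1) : tv_lab L ->
  exists C : {set T}, (#|C| <= (k * (d + 1)).+1)%N /\
    forall L', (forall t, t \in C -> L' t = L t) -> tv_lab L'.
Proof.
move=> [surj [x hx]].
pose W j := proj1_sig (constructive_indefinite_description _ (hx j)).
have hW : forall j, [/\ forall t, 0 <= W j t,
    \sum_(t in [set t | L t == j]) W j t = 1 &
    x = \sum_(t in [set t | L t == j]) W j t *: p t].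
  by move=> j; have [? [? ?]] := proj2_sig (constructive_indefinite_description _ (hx j)).
pose mu t := W (L t) t.
have blk : forall j, Y L mu j = row_mx x 1.
  move=> j; have [_ h1 h2] := hW j; rewrite blocksum.
  have e1 : \sum_(t | L t == j) mu t *: p t = x.
    by rewrite h2; apply: eq_big => t; [by rewrite inE | by move/eqP <-].
  have e2 : \sum_(t | L t == j) mu t = 1.
    by rewrite -h1; apply: eq_big => t; [by rewrite inE | by move/eqP <-].
  by rewrite e1 e2 scale1r.
have hE : \sum_t mu t *: E t (L t) = 0.
  by apply/matrixP => a b; rewrite E_entry !blk subrr [RHS]mxE.
have mu0 : forall t, 0 <= mu t by move=> t; have [h _ _] := hW (L t); exact: h.
pose a t : 'rV[R]_((k * (d + 1)) + 1) :=
  row_mx (mxvec (E t (L t))) ((L t == ord_max)%:R *: (1 : 'rV[R]_1)).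
have spl : forall nu : T -> R, \sum_t nu t *: a t =
    row_mx (mxvec (\sum_t nu t *: E t (L t))) ((\sum_(t | L t == ord_max) nu t) *: 1).
  move=> nu; rewrite /a; under eq_bigr do rewrite scale_row_mx.
  rewrite sum_row_mx sum_mxvec; congr row_mx.
  under eq_bigr do rewrite scalerA; rewrite -scaler_suml; congr (_ *: _).
  by rewrite -[RHS]sum_natmul; apply: eq_bigr => t _; rewrite mulrC.
have s1 : \sum_(t | L t == ord_max) mu t = 1.
  have := blk ord_max; rewrite blocksum => /eq_row_mx [_ h].
  have := congr1 (fun M : 'rV[R]_1 => M ord0 ord0) h.
  by rewrite !mxE eqxx !mulr1.
have [mu' [mu'0 mu'supp mu'card mu'sum]] := supp_red a mu0.
rewrite !spl in mu'sum; have [h1 h2] := eq_row_mx mu'sum.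
rewrite hE linear0 in h1; move/eqP: h1; rewrite mxvec_eq0 => /eqP hE'.
have s'1 : \sum_(t | L t == ord_max) mu' t = 1.
  have := congr1 (fun M : 'rV[R]_1 => M ord0 ord0) h2.
  by rewrite !mxE eqxx !mulr1 s1.
have pos : 0 < \sum_t mu' t.
  apply: lt_le_trans (_ : 0 < \sum_(t | L t == ord_max) mu' t) _.
    by rewrite s'1 ltr01.
  rewrite [X in _ <= X](bigID (fun t => L t == ord_max)) /= lerDl.
  by apply: sumr_ge0 => t _; exact: mu'0.
exists [set t | mu' t != 0]; split; first by rewrite addn1 in mu'card.
move=> L' hL'; apply: (core_lemma mu'0 hE' pos) => t ht.
by rewrite hL' // inE.
Qed.

End Sark.

End Part4.
Import Part4.

Module Part5.

Section Comb.
Variables (T : finType).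

Definition part n (L : T -> 'I_n) : {set {set T}} := [set [set t | L t == j] | j : 'I_n].

Definition surj n (L : T -> 'I_n) := forall j, exists t, L t = j.

Lemma part_set0 n (L : T -> 'I_n) : surj L -> set0 \notin part L.
Proof.
move=> hs; apply/imsetP => -[j _ e].
have [t ht] := hs j.
by have := in_set0 t; rewrite e inE ht eqxx.
Qed.

Lemma part_card n (L : T -> 'I_n) : surj L -> #|part L| = n.
Proof.
move=> hs; rewrite card_imset ?card_ord // => i j e.
have [t ht] := hs i.
have : t \in [set t | L t == i] by rewrite inE ht.
by rewrite e inE ht => /eqP.
Qed.

Lemma part_partition n (L : T -> 'I_n) : surj L -> partition (part L) [set: T].
Proof.
move=> hs; apply/and3P; split; last exact: part_set0.
- apply/eqP/setP => t; rewrite inE; apply/bigcupP.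
  by exists [set s | L s == L t]; [exact: imset_f | rewrite inE].
- apply/trivIsetP => A B /imsetP [i _ ->] /imsetP [j _ ->] neq.
  rewrite -setI_eq0; apply/eqP/setP => t; rewrite !inE.
  apply/negP => /andP [/eqP hi /eqP hj].
  by move: neq; rewrite -hi -hj eqxx.
Qed.

Lemma restrictT (P : {set {set T}}) : set0 \notin P -> restrict P [set: T] = P.
Proof.
move=> h; rewrite /restrict.
have -> : [set B :&: [set: T] | B in P] = P.
  by rewrite (eq_imset (g := id)) ?imset_id // => B; rewrite setIT.
apply/setP => B; rewrite !inE; case: (eqVneq B set0) => [->|//].
by rewrite (negbTE h).
Qed.

Lemma pdist_sym (P Q : {set {set T}}) : pdist P Q = pdist Q P.
Proof. by apply: eq_bigl => Y; rewrite eq_sym. Qed.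

Lemma bigmin_le (I : finType) (P : pred I) (F : I -> nat) m i0 :
  P i0 -> (\big[minn/m]_(i | P i) F i <= F i0)%N.
Proof.
move=> h; rewrite -big_filter.
have : i0 \in filter P (index_enum I) by rewrite mem_filter h mem_index_enum.
elim: (filter P _) => [//|x s IH]; rewrite inE big_cons => /orP [/eqP ->|hs].
  exact: geq_minl.
exact: leq_trans (geq_minr _ _) (IH hs).
Qed.

Lemma pdist_one (P Q : {set {set T}}) (t : T) :
  set0 \notin P -> set0 \notin Q -> P != Q ->
  restrict P (~: [set t]) = restrict Q (~: [set t]) -> pdist P Q = 1%N.
Proof.
move=> hP hQ hPQ hr; apply/eqP; rewrite eqn_leq; apply/andP; split.
  rewrite -(cards1 t) /pdist; apply: bigmin_le; by rewrite hr.
apply: (big_ind (fun x => 0 < x)%N).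
- by apply/card_gt0P; exists t.
- by move=> x y hx hy; rewrite leq_min hx hy.
move=> Y /eqP hY; rewrite card_gt0; apply/set0Pn.
case: (set_0Vmem Y) => [e|[y hy]]; last by exists y.
by move: hY; rewrite e setC0 !restrictT // => e'; rewrite e' eqxx in hPQ.
Qed.

Lemma pdist_step n (L L' : T -> 'I_n) (t : T) : surj L -> surj L' ->
  L t != L' t -> (forall s, s != t -> L s = L' s) -> pdist (part L) (part L') = 1%N.
Proof.
move=> hs hs' ht hsame.
apply: (pdist_one (t := t)); rewrite ?part_set0 //.
- apply/negP => /eqP e.
  have : [set s | L s == L t] \in part L' by rewrite -e; exact: imset_f.
  case/imsetP => j _ ej.
  have : t \in [set s | L s == L t] by rewrite inE.
  rewrite ej inE => /eqP Ltj.
  have [s hs1] := hs' (L t).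
  have st : s != t by apply: contraNneq ht => e1; rewrite -hs1 e1.
  have : s \in [set s | L s == L t] by rewrite inE hsame // hs1.
  rewrite ej inE hs1 => /eqP e2.
  by rewrite e2 Ltj eqxx in ht.
- rewrite /restrict /part -!imset_comp; congr (_ :\ _).
  apply: eq_imset => j /=; apply/setP => s; rewrite !inE.
  by case: (eqVneq s t) => [->|/hsame ->]; rewrite ?eqxx ?andbF.
Qed.

End Comb.

Section Main.
Variables (R : realType) (d k : nat) (T : finType) (p : T -> 'rV[R]_d).

Definition conn (P Q : {set {set T}}) :=
  exists (n : nat) (f : nat -> {set {set T}}),
    f 0%N = P /\ f n = Q /\
    (forall i, (i <= n)%N -> is_tverberg p k.+1 (f i)) /\
    (forall i, (i < n)%N -> pdist (f i) (f i.+1) = 1%N).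

Lemma conn_refl P : is_tverberg p k.+1 P -> conn P P.
Proof. by move=> h; exists 0%N, (fun=> P); split => //; split => //; split. Qed.

Lemma conn_step P Q : is_tverberg p k.+1 P -> is_tverberg p k.+1 Q ->
  pdist P Q = 1%N -> conn P Q.
Proof.
move=> hP hQ h; exists 1%N, (fun i => if i == 0%N then P else Q).
split => //; split => //; split.
  by move=> [|i] _.
by move=> [|i].
Qed.

Lemma conn_sym P Q : conn P Q -> conn Q P.
Proof.
move=> [n [f [f0 [fn [ft fd]]]]].
exists n, (fun i => f (n - i)%N); split; first by rewrite subn0.
split; first by rewrite subnn.
split; first by move=> i hi; apply: ft; exact: leq_subr.
move=> i hi; rewrite subnS.
have e : (n - i = (n - i).-1.+1)%N by rewrite prednK // subn_gt0.
rewrite {1}e pdist_sym fd //; lia.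
Qed.

Lemma conn_trans P Q S : conn P Q -> conn Q S -> conn P S.
Proof.
move=> [n1 [f1 [f10 [f1n [f1t f1d]]]]] [n2 [f2 [f20 [f2n [f2t f2d]]]]].
exists (n1 + n2)%N, (fun i => if (i < n1)%N then f1 i else f2 (i - n1)%N).
split.
  case: ifP => // h; rewrite sub0n f20 -f1n -f10.
  by have -> : n1 = 0%N by case: n1 h {f1n f1t f1d}.
split; first by rewrite ltnNge leq_addr /= addKn.
split.
  move=> i hi; case: ifP => h; first by apply: f1t; exact: ltnW.
  by apply: f2t; rewrite leq_subLR.
move=> i hi /=; case: (ltnP i.+1 n1) => h1.
  by rewrite (ltnW h1); apply: f1d; exact: ltnW.
case: (ltnP i n1) => h2.
  have e : i.+1 = n1 by apply/eqP; rewrite eqn_leq h1 h2.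
  by rewrite e subnn f20 -f1n -e; apply: f1d; rewrite -e.
rewrite subSn //; apply: f2d.
by rewrite ltn_subLR // addnC.
Qed.

Lemma tv_part (L : T -> 'I_k.+1) : tv_lab p L -> is_tverberg p k.+1 (part L).
Proof.
move=> [hs [x hx]]; split.
  by split; [exact: part_partition | exact: part_card].
by exists x => B /imsetP [j _ ->]; exact: hx.
Qed.

Definition core (L : T -> 'I_k.+1) (C : {set T}) :=
  forall L', (forall t, t \in C -> L' t = L t) -> tv_lab p L'.

Lemma part_ext (L1 L2 : T -> 'I_k.+1) : L1 =1 L2 -> part L1 = part L2.
Proof.
by move=> e; apply: eq_imset => j; apply/setP => t; rewrite !inE e.
Qed.

Lemma core_path (C : {set T}) (L1 L2 : T -> 'I_k.+1) :
  core L1 C -> (forall t, t \in C -> L2 t = L1 t) -> conn (part L1) (part L2).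
Proof.
have [n hn] : exists n, #|[set t | L1 t != L2 t]| = n by eexists.
elim: n L1 hn => [|n IH] L1 hn hc hL2.
  have e : L1 =1 L2.
    move=> t; apply/eqP; apply: contraT => h.
    have ht : t \in [set t | L1 t != L2 t] by rewrite inE.
    have : (0 < #|[set t | L1 t != L2 t]|)%N by apply/card_gt0P; exists t.
    by rewrite hn.
  by rewrite -(part_ext e); apply: conn_refl; apply: tv_part; exact: hc.
have [t ht] : exists t, t \in [set t | L1 t != L2 t].
  by apply/card_gt0P; rewrite hn.
move: (ht); rewrite inE => ht'.
have tC : t \notin C by apply: contra ht' => /hL2 ->.
pose L1' s := if s == t then L2 t else L1 s.
have hc' : core L1' C.
  move=> L' hL'; apply: hc => s hs; rewrite hL' // /L1'.
  by case: (eqVneq s t) => [e|//]; subst s; rewrite hs in tC.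
have hn' : #|[set s | L1' s != L2 s]| = n.
  have : [set s | L1' s != L2 s] = [set s | L1 s != L2 s] :\ t.
    apply/setP => s; rewrite !inE /L1'.
    by case: (eqVneq s t) => [->|]; rewrite ?eqxx.
  move=> ->; apply/eqP; rewrite -eqSS -hn (cardsD1 t [set s | L1 s != L2 s]) ht.
  by rewrite add1n.
have hL2' : forall s, s \in C -> L2 s = L1' s.
  move=> s hs; rewrite hL2 // /L1'; case: (eqVneq s t) => [e|//].
  by subst s; rewrite hs in tC.
apply: conn_trans (IH L1' hn' hc' hL2').
have tv1 : tv_lab p L1 by apply: hc.
have tv1' : tv_lab p L1' by apply: hc'.
apply: conn_step; [exact: tv_part | exact: tv_part |].
apply: (pdist_step (t := t)); [exact: tv1.1 | exact: tv1'.1 | |].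
  by rewrite /L1' eqxx.
by move=> s hs; rewrite /L1' (negbTE hs).
Qed.

Lemma disj_path L1 C1 L2 C2 : core L1 C1 -> core L2 C2 ->
  (forall t, t \in C1 -> t \notin C2) -> conn (part L1) (part L2).
Proof.
move=> h1 h2 hd.
pose L s := if s \in C1 then L1 s else L2 s.
apply: (conn_trans (Q := part L)).
  by apply: (core_path h1) => t ht; rewrite /L ht.
apply: conn_sym; apply: (core_path h2) => t ht; rewrite /L.
by case: ifP => // h; have := hd t h; rewrite ht.
Qed.

Lemma part_of P : is_tverberg p k.+1 P -> exists L : T -> 'I_k.+1, part L = P /\ tv_lab p L.
Proof.
move=> [[hpart hcard] [x hx]].
move/and3P: hpart => [/eqP hcov htriv h0].
have [B0 B0P] : exists B0, B0 \in P.
  by apply/card_gt0P; rewrite hcard.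
pose ev (j : 'I_k.+1) : {set T} := @enum_val _ (mem P) (cast_ord (esym hcard) j).
pose L t : 'I_k.+1 := cast_ord hcard (enum_rank_in B0P (pblock P t)).
have evP : forall j, ev j \in P by move=> j; exact: enum_valP.
have covT : forall t, t \in cover P by move=> t; rewrite hcov inE.
have hL : forall j, [set t | L t == j] = ev j.
  move=> j; apply/setP => t; rewrite inE.
  apply/eqP/idP => [<-|ht].
    rewrite /ev /L cast_ordK enum_rankK_in ?mem_pblock ?covT //.
    exact: pblock_mem.
  rewrite /L (def_pblock htriv (evP j) ht) /ev enum_valK_in.
  by rewrite cast_ordKV.
exists L; split.
  apply/setP => B; apply/imsetP/idP => [[j _ ->]|hB].
    by rewrite hL.
  exists (cast_ord hcard (enum_rank_in B0P B)) => //.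
  by rewrite hL /ev cast_ordK enum_rankK_in.
split.
  move=> j; have : ev j != set0 by apply: contraNneq h0 => <-.
  case/set0Pn => t; rewrite -hL inE => /eqP <-; by exists t.
by exists x => j; rewrite hL; apply: hx.
Qed.

End Main.

Theorem main_mn (R : realType) (mn : MinNormProp R) (r d : nat) (T : finType)
    (p : T -> 'rV[R]_d) :
  (0 < r)%N -> (0 < d)%N -> injective p ->
  (3 * Tv d r - 1 <= #|T|)%N ->
  tverberg_graph_connected p r.
Proof.
case: r => [//|k] _ _ _ hT P Q hP hQ.
have [LP [ePL tvP]] := part_of hP.
have [LQ [eQL tvQ]] := part_of hQ.
have [CP [cP coreP]] := core_red tvP.
have [CQ [cQ coreQ]] := core_red tvQ.
rewrite -ePL -eQL.
suff : conn k p (part LP) (part LQ) by [].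
case: (boolP [disjoint CP & CQ]) => hd.
  apply: (disj_path coreP coreQ) => t h1.
  by rewrite (disjointFr hd h1).
have hX : ((k * (d + 1)).+1 <= #|~: (CP :|: CQ)|)%N.
  have h1 := cardsC (CP :|: CQ).
  have h2 := cardsUI CP CQ.
  have h3 : (0 < #|CP :&: CQ|)%N by rewrite card_gt0 setI_eq0.
  move: hT; rewrite /Tv; lia.
have [LR [CR [sub coreR]]] := tverberg_exists p mn hX.
apply: (conn_trans (Q := part LR)).
  apply: (disj_path coreP coreR) => t ht; apply/negP => /(subsetP sub).
  by rewrite !inE ht.
apply: (disj_path coreR coreQ) => t ht.
by have := subsetP sub t ht; rewrite !inE negb_or => /andP [_].
Qed.

End Part5.
Import Part5.

Module Part1.
Import boolp classical_sets topology normedtype derive.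
Import numFieldNormedType.Exports.
Local Open Scope ring_scope.

Section MinNorm.
Variable R : realType.
Definition nsq D (u : 'rV[R]_D) := \sum_j u ord0 j ^+ 2.

Lemma cont_sum (T : topologicalType) n (g : 'I_n -> T -> R) :
  (forall i, continuous (g i)) -> continuous (fun x => \sum_(i < n) g i x).
Proof.
elim: n g => [|n IH] g hg.
  have -> : (fun x => \sum_(i < 0) g i x) = fun=> 0.
    by apply: funext => x; rewrite big_ord0.
  exact: cst_continuous.
have -> : (fun x => \sum_(i < n.+1) g i x) =
   (fun x => \sum_(i < n) g (widen_ord (leqnSn n) i) x + g ord_max x).
  by apply: funext => x; rewrite big_ord_recr.
move=> x; apply: cvgD; last exact: hg.
by apply: (IH (fun i => g (widen_ord (leqnSn n) i))) => i; exact: hg.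
Qed.


Lemma cont_mul (T : topologicalType) (f g : T -> R) :
  continuous f -> continuous g -> continuous (fun x => f x * g x).
Proof. by move=> hf hg x; apply: cvgM; [exact: hf | exact: hg]. Qed.

Lemma cont_coord n i : continuous (fun l : 'rV[R]_n => l ord0 i).
Proof. exact: coord_continuous. Qed.

Lemma cont_cst (T : topologicalType) (c : R) : continuous (fun _ : T => c).
Proof. exact: cst_continuous. Qed.

Lemma nsq_sumE k D (v : 'I_k -> 'rV[R]_D) (l : 'I_k -> R) :
  nsq (\sum_i l i *: v i) = \sum_j (\sum_i l i * v i ord0 j) ^+ 2.
Proof.
by apply: eq_bigr => j _; rewrite summxE; congr (_ ^+ 2); apply: eq_bigr => i _; rewrite mxE.
Qed.

Lemma minnorm (k D : nat) (v : 'I_k.+1 -> 'rV[R]_D) :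
  exists lam : 'I_k.+1 -> R, [/\ (forall i, 0 <= lam i), \sum_i lam i = 1 &
    forall mu : 'I_k.+1 -> R, (forall i, 0 <= mu i) -> \sum_i mu i = 1 ->
      nsq (\sum_i lam i *: v i) <= nsq (\sum_i mu i *: v i)].
Proof.
pose A := [set l : 'rV[R]_k.+1 | (forall i, 0 <= l ord0 i) /\ \sum_i l ord0 i = 1]%classic.
pose f (l : 'rV[R]_k.+1) := \sum_j (\sum_i l ord0 i * v i ord0 j) ^+ 2.
have A0 : (A !=set0)%classic.
  exists (\row_i (i == ord0)%:R); split.
    by move=> i; rewrite mxE ler0n.
  rewrite (bigD1 ord0) //= big1 => [|i /negbTE Hi]; last by rewrite mxE Hi.
  by rewrite mxE eqxx addr0.
have Acl : closed A.
  have -> : A = ((\bigcap_(i in [set: 'I_k.+1]) ((fun l : 'rV[R]_k.+1 => l ord0 i) @^-1` [set x | 0 <= x]))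
       `&` ((fun l : 'rV[R]_k.+1 => \sum_i l ord0 i) @^-1` [set x | x = 1]))%classic.
    apply/seteqP; split => l /=.
      by move=> [h1 h2]; split => // i _; exact: h1.
    by move=> [h1 h2]; split => // i; exact: h1.
  apply: closedI.
    apply: closed_bigI => i _; apply: preimage_closed; last exact: closed_ge.
    by move=> l _; exact: coord_continuous.
  apply: preimage_closed; last exact: closed_eq.
  move=> l _.
  have := @cont_sum _ _ (fun i (l : 'rV[R]_k.+1) => l ord0 i) (fun i => @coord_continuous _ _ _ _ _).
  by move=> /(_ l).
have Acpt : compact A.
  apply: (subclosed_compact Acl (rV_compact (fun=> @segment_compact R 0 1))).
  move=> l [h1 h2] i /=; rewrite in_itv /= h1 /= -h2.
  rewrite (bigD1 i) //= lerDl; apply: sumr_ge0 => j _; exact: h1.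
have fc : continuous f.
  rewrite /f.
  have hs : forall j, continuous (fun l : 'rV[R]_k.+1 => \sum_i l ord0 i * v i ord0 j).
    move=> j; have := @cont_sum _ k.+1 (fun i (l : 'rV[R]_k.+1) => l ord0 i * v i ord0 j).
    apply => i; apply: cont_mul; [exact: cont_coord | exact: cont_cst].
  have := @cont_sum _ D (fun j (l : 'rV[R]_k.+1) => (\sum_i l ord0 i * v i ord0 j) ^+ 2).
  apply => j; rewrite /GRing.exp /=; exact: cont_mul.
have [c cA cmin] := EVT_min_rV A0 Acpt (@continuous_subspaceT _ _ A _ fc).
move: (cA); rewrite inE => -[c1 c2].
exists (fun i => c ord0 i); split => // mu mu0 mu1.
rewrite !nsq_sumE.
have := cmin (\row_i mu i); rewrite /f.
have -> : \sum_j (\sum_i (\row_i0 mu i0) ord0 i * v i ord0 j) ^+ 2 = 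
   \sum_j (\sum_i mu i * v i ord0 j) ^+ 2.
  by apply: eq_bigr => j _; congr (_ ^+ 2); apply: eq_bigr => i _; rewrite mxE.
apply; rewrite inE; split => [i|]; first by rewrite mxE.
by under eq_bigr => i _ do rewrite mxE.
Qed.

End MinNorm.

Lemma minnorm_prop (R : realType) : MinNormProp R.
Proof.
move=> k D v; have [lam [l0 l1 lmin]] := minnorm v.
by exists lam; split.
Qed.
End Part1.

Theorem theorem1p3 (R : realType) (r d : nat) (T : finType)
    (p : T -> 'rV[R]_d) :
  (0 < r)%N -> (0 < d)%N -> injective p ->
  (3 * Tv d r - 1 <= #|T|)%N ->
  tverberg_graph_connected p r.
Proof. exact: (main_mn (@Part1.minnorm_prop R)). Qed.
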